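(* Let $\varphi:\Lambda\to\Gamma$ be a regular covering map of finite simplicial graphs without isolated vertices, and let $v,v'$ be vertices of $\Gamma$ with $\mathrm{lk}(v)\subseteq\mathrm{st}(v')$. Then the transvection $T^{v'}_v$ of $A_\Gamma$ sending $v$ to $vv'$ and fixing all other vertices is liftable if and only if $v\lesssim_\varphi v'$.
   Context: Graphs are finite simplicial graphs; subgraphs are induced. $A_\Gamma$ is the right-angled Artin group with generators $V\Gamma$ and relations $[u,w]=1$ for edges $\{u,w\}$. $\mathrm{lk}(v)$ is induced by the neighbours of $v$, $\mathrm{st}(v)$ by $\mathrm{lk}(v)\cup\{v\}$. A covering map $\varphi:\Lambda\to\Gamma$ is a surjective simplicial map mapping the neighbours of each vertex $u$ bijectively onto the neighbours of $\varphi(u)$; regular means the group $\mathrm{Deck}(\varphi)$ of graph automorphisms $\mu$ of $\Lambda$ with $\varphi\mu=\varphi$ acts transitively on each fiber. $\phi:A_\Lambda\to A_\Gamma$ is induced by $\varphi$; $f\in\mathrm{Aut}(A_\Gamma)$ is liftable if there is $F\in\mathrm{Aut}(A_\Lambda)$ with $f\circ\phi=\phi\circ F$. For vertices $x,y$ of $\Gamma$, $x\lesssim_\varphi y$ means: for every $u\in\varphi^{-1}(x)$ there is $u'\in\varphi^{-1}(y)$ with $\mathrm{lk}(u)\subseteq\mathrm{st}(u')$. *)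

(* Defs.v *)
From mathcomp Require Import all_boot.
Set Implicit Arguments. Unset Strict Implicit. Unset Printing Implicit Defensive.

Definition simple_graph (V : finType) (e : rel V) : Prop :=
  symmetric e /\ irreflexive e.

Definition no_isolated (V : finType) (e : rel V) : Prop :=
  forall x : V, exists y, e x y.

Definition lk_sub_st (V : finType) (e : rel V) (x y : V) : Prop :=
  forall w, e x w -> w = y \/ e y w.

Definition covering_map (VL VG : finType) (eL : rel VL) (eG : rel VG)
    (phi : VL -> VG) : Prop :=
  [/\ forall x : VG, exists u, phi u = x,
      forall u w, eL u w -> eG (phi u) (phi w),
      forall u w1 w2, eL u w1 -> eL u w2 -> phi w1 = phi w2 -> w1 = w2 &
      forall u x, eG (phi u) x -> exists2 w, eL u w & phi w = x].

Definition graph_aut (V : finType) (e : rel V) (mu : V -> V) : Prop :=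
  bijective mu /\ forall x y, e (mu x) (mu y) = e x y.

Definition regular_covering (VL VG : finType) (eL : rel VL) (eG : rel VG)
    (phi : VL -> VG) : Prop :=
  covering_map eL eG phi /\
  forall u u', phi u = phi u' ->
    exists mu, [/\ graph_aut eL mu, forall w, phi (mu w) = phi w & mu u = u'].

Definition lesssim (VL VG : finType) (eL : rel VL) (phi : VL -> VG)
    (x y : VG) : Prop :=
  forall u, phi u = x -> exists u', phi u' = y /\ lk_sub_st eL u u'.

(** Words in the generators of A_Γ: a letter (x, b) stands for x if b = false
    and for x^-1 if b = true. *)
Definition word (V : Type) := seq (V * bool).

Definition inv_word (V : Type) (s : word V) : word V :=
  rev (map (fun p => (p.1, ~~ p.2)) s).

(** The defining congruence of A_Γ = <V | [u,w] = 1 for edges {u,w}>. *)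
Inductive raag_eq (V : finType) (e : rel V) : word V -> word V -> Prop :=
  | raag_refl w : raag_eq e w w
  | raag_sym w w' : raag_eq e w w' -> raag_eq e w' w
  | raag_trans w1 w2 w3 : raag_eq e w1 w2 -> raag_eq e w2 w3 -> raag_eq e w1 w3
  | raag_cancel (l r : word V) (x : V) (b : bool) :
      raag_eq e (l ++ [:: (x, b); (x, ~~ b)] ++ r) (l ++ r)
  | raag_comm (l r : word V) (x y : V) (b c : bool) : e x y ->
      raag_eq e (l ++ [:: (x, b); (y, c)] ++ r) (l ++ [:: (y, c); (x, b)] ++ r).

Definition subst (V W : Type) (f : V -> word W) (w : word V) : word W :=
  flatten (map (fun p => if p.2 then inv_word (f p.1) else f p.1) w).

Definition raag_hom (V W : finType) (e : rel V) (e' : rel W)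
    (f : V -> word W) : Prop :=
  forall w w', raag_eq e w w' -> raag_eq e' (subst f w) (subst f w').

Definition raag_aut (V : finType) (e : rel V) (f : V -> word V) : Prop :=
  [/\ raag_hom e e f,
      forall w w', raag_eq e (subst f w) (subst f w') -> raag_eq e w w' &
      forall w, exists w', raag_eq e (subst f w') w].

Definition induced_hom (VL VG : Type) (phi : VL -> VG) : VL -> word VG :=
  fun u => [:: (phi u, false)].

(** f ∈ Aut(A_Γ) is liftable: ∃ F ∈ Aut(A_Λ), f ∘ φ = φ ∘ F. *)
Definition liftable (VL VG : finType) (eL : rel VL) (eG : rel VG)
    (phi : VL -> VG) (f : VG -> word VG) : Prop :=
  exists F : VL -> word VL, raag_aut eL F /\
    forall w : word VL,
      raag_eq eG (subst f (subst (induced_hom phi) w))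
                 (subst (induced_hom phi) (subst F w)).

Definition transvection (V : finType) (v v' : V) : V -> word V :=
  fun x => if x == v then [:: (v, false); (v', false)] else [:: (x, false)].

(* Main.v *)
Require Import Defs.
From mathcomp Require Import all_boot all_order all_algebra.
From mathcomp Require Import ring.
From Stdlib Require Import ClassicalEpsilon.
Set Implicit Arguments. Unset Strict Implicit. Unset Printing Implicit Defensive.

Definition pw (T W : Type) (f : T -> word W) (p : T * bool) :=
  if p.2 then inv_word (f p.1) else f p.1.

Section Words.
Variables (V : finType) (e : rel V).
Notation req := (raag_eq e).

Lemma req_ctx (l r w w' : word V) : req w w' -> req (l ++ w ++ r) (l ++ w' ++ r).
Proof.
elim=> [w0|w1 w2 _ IH|w1 w2 w3 _ IH1 _ IH2|l0 r0 x b|l0 r0 x y b c exy].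
- exact: raag_refl.
- exact: raag_sym.
- exact: raag_trans IH2.
- rewrite !catA -(catA (l ++ l0)) -!catA.
  have := raag_cancel e (l ++ l0) (r0 ++ r) x b. by rewrite -!catA.
- have := raag_comm (l ++ l0) (r0 ++ r) b c exy. by rewrite -!catA.
Qed.

Lemma req_catl (l w w' : word V) : req w w' -> req (l ++ w) (l ++ w').
Proof. by move=> h; have := req_ctx l [::] h; rewrite !cats0. Qed.

Lemma req_catr (r w w' : word V) : req w w' -> req (w ++ r) (w' ++ r).
Proof. by move=> h; have := req_ctx [::] r h. Qed.

Lemma req_cat (a a' b b' : word V) : req a a' -> req b b' -> req (a ++ b) (a' ++ b').
Proof. move=> h1 h2; apply: raag_trans (req_catr _ h1) (req_catl _ h2). Qed.

Lemma inv_word_cons (p : V * bool) s : inv_word (p :: s) = inv_word s ++ [:: (p.1, ~~ p.2)].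
Proof. by rewrite /inv_word /= rev_cons cats1. Qed.

Lemma inv_word_cat (a b : word V) : inv_word (a ++ b) = inv_word b ++ inv_word a.
Proof. by rewrite /inv_word map_cat rev_cat. Qed.

Lemma inv_wordK (a : word V) : inv_word (inv_word a) = a.
Proof.
rewrite /inv_word map_rev revK -map_comp -[RHS]map_id; apply: eq_map => -[x b] /=.
by rewrite negbK.
Qed.

Lemma req_cancel_word (s : word V) : req (s ++ inv_word s) [::].
Proof.
elim: s => [|p s IH] /=; first exact: raag_refl.
rewrite inv_word_cons.
apply: raag_trans (_ : req ([:: p] ++ [:: (p.1, ~~ p.2)]) [::]).
  have := req_ctx [:: p] [:: (p.1, ~~ p.2)] IH; rewrite /= -catA //.
by case: p => x b; have := raag_cancel e [::] [::] x b.
Qed.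

Lemma req_cancel_word' (s : word V) : req (inv_word s ++ s) [::].
Proof. by have := req_cancel_word (inv_word s); rewrite inv_wordK. Qed.

Lemma req_inv (w w' : word V) : req w w' -> req (inv_word w) (inv_word w').
Proof.
elim=> [w0|w1 w2 _ IH|w1 w2 w3 _ IH1 _ IH2|l0 r0 x b|l0 r0 x y b c exy].
- exact: raag_refl.
- exact: raag_sym.
- exact: raag_trans IH2.
- rewrite !inv_word_cat /= /inv_word /=.
  have -> : rev [:: (x, ~~ b); (x, ~~ ~~ b)] = [:: (x, ~~ ~~ b); (x, ~~ b)] by [].
  rewrite negbK -catA; exact: raag_cancel.
- rewrite !inv_word_cat /inv_word /=.
  have -> : rev [:: (x, ~~ b); (y, ~~ c)] = [:: (y, ~~ c); (x, ~~ b)] by [].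
  have -> : rev [:: (y, ~~ c); (x, ~~ b)] = [:: (x, ~~ b); (y, ~~ c)] by [].
  rewrite -!catA; apply: raag_sym.
  exact: (raag_comm _ _ (~~ b) (~~ c) exy).
Qed.

Lemma comm_inv_l (A B : word V) : req (A ++ B) (B ++ A) -> req (inv_word A ++ B) (B ++ inv_word A).
Proof.
move=> h.
(* A^-1 B ~ A^-1 B A A^-1 ~ A^-1 A B A^-1 ~ B A^-1 *)
have s1 : req (inv_word A ++ B) (inv_word A ++ (B ++ A) ++ inv_word A).
  apply: raag_sym; rewrite -catA; apply: req_catl.
  have := req_catl B (req_cancel_word A); rewrite cats0 catA. done.
have s2 : req (inv_word A ++ (B ++ A) ++ inv_word A) (inv_word A ++ (A ++ B) ++ inv_word A).
  by apply: req_ctx; apply: raag_sym.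
have s3 : req (inv_word A ++ (A ++ B) ++ inv_word A) (B ++ inv_word A).
  rewrite catA catA -(catA (inv_word A)).
  have := req_catr (B ++ inv_word A) (req_cancel_word' A). by rewrite -!catA.
exact: raag_trans s1 (raag_trans s2 s3).
Qed.

Lemma comm_sym (A B : word V) : req (A ++ B) (B ++ A) -> req (B ++ A) (A ++ B).
Proof. exact: raag_sym. Qed.

Lemma comm_pw (T : Type) (f : T -> word V) x y b c :
  req (f x ++ f y) (f y ++ f x) -> req (pw f (x, b) ++ pw f (y, c)) (pw f (y, c) ++ pw f (x, b)).
Proof.
rewrite /pw /= => h.
have h1 := comm_inv_l h.
have h2 := comm_inv_l (comm_sym h).
have h3 := comm_inv_l (comm_sym h1).
by case: b; case: c => //; apply: comm_sym.
Qed.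

End Words.

Section Subst.
Variables (V W X : finType).

Lemma subst_cons (f : V -> word W) p s : subst f (p :: s) = pw f p ++ subst f s.
Proof. by []. Qed.

Lemma subst_cat (f : V -> word W) a b : subst f (a ++ b) = subst f a ++ subst f b.
Proof. by rewrite /subst map_cat flatten_cat. Qed.

Lemma subst_nil (f : V -> word W) : subst f [::] = [::].
Proof. by []. Qed.

Lemma subst1 (f : V -> word W) x : subst f [:: (x, false)] = f x.
Proof. by rewrite /subst /= cats0. Qed.

Lemma pw_inv (f : V -> word W) p : inv_word (pw f p) = pw f (p.1, ~~ p.2).
Proof. by case: p => x [] //=; rewrite /pw /= inv_wordK. Qed.

Lemma subst_inv (f : V -> word W) s : subst f (inv_word s) = inv_word (subst f s).
Proof.
elim: s => [|p s IH] //.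
rewrite inv_word_cons subst_cat IH subst_cons inv_word_cat pw_inv; congr (_ ++ _).
by rewrite /subst /= cats0.
Qed.

End Subst.
Section Subst2.
Variables (V W X : finType).
Lemma subst_pw (f : W -> word X) (g : V -> word W) p :
  subst f (pw g p) = pw (fun x => subst f (g x)) p.
Proof. by case: p => x [] //; apply: subst_inv. Qed.

Lemma subst_comp (f : W -> word X) (g : V -> word W) w :
  subst f (subst g w) = subst (fun x => subst f (g x)) w.
Proof.
elim: w => [|p w IH] //.
by rewrite !subst_cons subst_cat IH subst_pw.
Qed.

Lemma subst_id (w : word V) : subst (fun x => [:: (x, false)]) w = w.
Proof. by elim: w => [|[x b] w IH] //; rewrite subst_cons IH; case: b. Qed.

Lemma eq_subst (f g : V -> word W) w : f =1 g -> subst f w = subst g w.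
Proof. by move=> h; elim: w => [|[x b] w IH] //; rewrite !subst_cons IH /pw /= h. Qed.

Variables (e : rel V) (e' : rel W).

Lemma subst_req (f g : V -> word W) w : (forall x, raag_eq e' (f x) (g x)) ->
  raag_eq e' (subst f w) (subst g w).
Proof.
move=> h; elim: w => [|[x b] w IH]; first exact: raag_refl.
rewrite !subst_cons; apply: req_cat => //.
by rewrite /pw /=; case: b => //; apply: req_inv.
Qed.

Lemma hom_of_edges (f : V -> word W) :
  (forall x y, e x y -> raag_eq e' (f x ++ f y) (f y ++ f x)) -> raag_hom e e' f.
Proof.
move=> h w w'.
elim=> [w0|w1 w2 _ IH|w1 w2 w3 _ IH1 _ IH2|l0 r0 x b|l0 r0 x y b c exy].
- exact: raag_refl.
- exact: raag_sym.
- exact: raag_trans IH2.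
- rewrite !subst_cat !subst_cons subst_nil cats0.
  have -> : pw f (x, ~~ b) = inv_word (pw f (x, b)) by rewrite pw_inv.
  have := req_ctx (subst f l0) (subst f r0) (req_cancel_word e' (pw f (x, b))).
  by rewrite catA.
- rewrite !subst_cat !subst_cons subst_nil !cats0 !catA.
  apply: req_catr; rewrite -!catA; apply: req_catl.
  exact: comm_pw (h _ _ exy).
Qed.

End Subst2.

Lemma fun_choice (A B : Type) (R : A -> B -> Prop) :
  (forall x, exists y, R x y) -> exists f, forall x, R x (f x).
Proof.
move=> h; exists (fun x => proj1_sig (constructive_indefinite_description _ (h x))).
by move=> x; case: (constructive_indefinite_description _ (h x)).
Qed.

Section Easy.
Variables (VL VG : finType) (eL : rel VL) (eG : rel VG) (phi : VL -> VG).
Hypothesis sL : simple_graph eL.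
Hypothesis sG : simple_graph eG.
Hypothesis simp : forall u w, eL u w -> eG (phi u) (phi w).
Variables (v v' : VG).
Hypothesis vv' : v <> v'.
Variable pr : VL -> VL.
Hypothesis Hpr : forall x, phi x = v -> phi (pr x) = v' /\ lk_sub_st eL x (pr x).

Definition Fs (s : bool) (x : VL) : word VL :=
  if phi x == v then [:: (x, false); (pr x, s)] else [:: (x, false)].

Notation req := (raag_eq eL).

Lemma Fs_edge1 s x y : eL x y -> phi x = v -> phi y != v ->
  req (Fs s x ++ Fs s y) (Fs s y ++ Fs s x).
Proof.
move=> exy px py; rewrite /Fs px eqxx (negbTE py) /=.
have [_ lk] := Hpr px.
case: (lk y exy) => [yE|epy].
- subst y.
  apply: (@raag_trans _ _ _ [:: (x, false); (pr x, false); (pr x, s)]).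
    case: s; last exact: raag_refl.
    apply: raag_trans (_ : req [:: (x, false)] _).
      exact: (raag_cancel eL [:: (x, false)] [::] (pr x) true).
    apply: raag_sym; exact: (raag_cancel eL [:: (x, false)] [::] (pr x) false).
  exact: (raag_comm [::] [:: (pr x, s)] false false exy).
- apply: (@raag_trans _ _ _ [:: (x, false); (y, false); (pr x, s)]).
    exact: (raag_comm [:: (x, false)] [::] s false epy).
  exact: (raag_comm [::] [:: (pr x, s)] false false exy).
Qed.

Lemma Fs_hom s : raag_hom eL eL (Fs s).
Proof.
apply: hom_of_edges => x y exy.
case: (eqVneq (phi x) v) => px; case: (eqVneq (phi y) v) => py.
- by move: (simp exy); rewrite px py (proj2 sG).
- exact: Fs_edge1.
- apply: raag_sym; apply: Fs_edge1 => //.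
  by rewrite (proj1 sL).
- rewrite /Fs (negbTE px) (negbTE py) /=.
  exact: (raag_comm [::] [::] false false exy).
Qed.

Lemma Fs_inv s x : req (subst (Fs s) (Fs (~~ s) x)) [:: (x, false)].
Proof.
rewrite /Fs; case: (eqVneq (phi x) v) => px /=; last first.
  by rewrite /subst /= /Fs (negbTE px) /=; exact: raag_refl.
have [ppx _] := Hpr px.
have pn : phi (pr x) != v by rewrite ppx; apply/eqP => h; apply: vv'; rewrite h.
rewrite /subst /= /pw /= /Fs px eqxx (negbTE pn) /=.
case: s => /=.
- exact: (raag_cancel eL [:: (x, false)] [::] (pr x) true).
- exact: (raag_cancel eL [:: (x, false)] [::] (pr x) false).
Qed.

Lemma Fs_aut s : raag_aut eL (Fs s).
Proof.
split.
- exact: Fs_hom.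
- move=> w w' h.
  have h2 := Fs_hom (~~ s) h.
  rewrite !subst_comp in h2.
  have e1 := subst_req w (Fs_inv (~~ s)).
  have e2 := subst_req w' (Fs_inv (~~ s)).
  rewrite negbK !subst_id in e1 e2.
  exact: raag_trans (raag_sym e1) (raag_trans h2 e2).
- move=> w; exists (subst (Fs (~~ s)) w).
  rewrite subst_comp.
  have := subst_req w (Fs_inv s); by rewrite subst_id.
Qed.

Lemma Fs_lift : forall w : word VL,
  raag_eq eG (subst (transvection v v') (subst (induced_hom phi) w))
             (subst (induced_hom phi) (subst (Fs false) w)).
Proof.
move=> w; rewrite !subst_comp.
have -> : subst (fun x => subst (transvection v v') (induced_hom phi x)) w =
          subst (fun x => subst (induced_hom phi) (Fs false x)) w.
  apply: eq_subst => x; rewrite /induced_hom subst1 /Fs /transvection.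
  case: (eqVneq (phi x) v) => px.
  - by rewrite /subst /= px (proj1 (Hpr px)).
  - by rewrite /subst /=.
exact: raag_refl.
Qed.

End Easy.

Import GRing.Theory.
Local Open Scope ring_scope.

Definition sg (b : bool) : rat := if b then -1 else 1.

Definition ab (V : finType) (w : word V) (x : V) : rat :=
  \sum_(p <- w) (if p.1 == x then sg p.2 else 0).

Section Ab.
Variable V : finType.

Lemma ab_nil x : ab ([::] : word V) x = 0.
Proof. by rewrite /ab big_nil. Qed.

Lemma ab_cons (p : V * bool) w x : ab (p :: w) x = (if p.1 == x then sg p.2 else 0) + ab w x.
Proof. by rewrite /ab big_cons. Qed.

Lemma ab_cat (a b : word V) x : ab (a ++ b) x = ab a x + ab b x.
Proof. by rewrite /ab big_cat. Qed.

Lemma ab_inv (s : word V) x : ab (inv_word s) x = - ab s x.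
Proof.
elim: s => [|p s IH]; first by rewrite /inv_word /= ab_nil oppr0.
rewrite inv_word_cons ab_cat IH ab_cons ab_cons ab_nil /=.
by case: (p.1 == x); case: p.2; rewrite /sg /=; ring.
Qed.

Lemma ab_req (e : rel V) w w' : raag_eq e w w' -> forall x, ab w x = ab w' x.
Proof.
elim=> [w0|w1 w2 _ IH|w1 w2 w3 _ IH1 _ IH2|l0 r0 y b|l0 r0 y z b c eyz] x.
- by [].
- by rewrite IH.
- by rewrite IH1 IH2.
- rewrite !ab_cat !ab_cons ab_nil /=.
  by case: (y == x); case: b; rewrite /sg /=; ring.
- rewrite !ab_cat !ab_cons ab_nil /=.
  congr (_ + (_ + _)); ring.
Qed.

End Ab.
Section Ab2.
Variable V : finType.
Lemma sum_pick (p : V) (t : rat) (g : V -> rat) :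
  \sum_z (if p == z then t else 0) * g z = t * g p.
Proof.
rewrite (bigD1 p) //= eqxx big1 ?addr0 // => z /negbTE zp.
by rewrite eq_sym zp mul0r.
Qed.

Lemma ab_subst (W : finType) (f : V -> word W) w x :
  ab (subst f w) x = \sum_z ab w z * ab (f z) x.
Proof.
elim: w => [|[y b] w IH].
  by rewrite /subst /= {1}/ab big_nil big1 // => z _; rewrite ab_nil mul0r.
rewrite subst_cons ab_cat IH.
under [RHS]eq_bigr => z _ do rewrite ab_cons mulrDl.
rewrite big_split /= sum_pick; congr (_ + _).
by rewrite /pw /=; case: b; rewrite /sg ?ab_inv ?mulN1r ?mul1r.
Qed.

Lemma ab_single (y x : V) : ab [:: (y, false)] x = if y == x then 1 else 0.
Proof. by rewrite ab_cons ab_nil addr0. Qed.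

Lemma ab_induced (W : finType) (phi : V -> W) w (x : W) :
  ab (subst (induced_hom phi) w) x = \sum_(y | phi y == x) ab w y.
Proof.
rewrite ab_subst [RHS]big_mkcond /=; apply: eq_bigr => y _.
by rewrite /induced_hom ab_cons ab_nil addr0 /=; case: (phi y == x); rewrite /sg ?mulr1 ?mulr0.
Qed.

End Ab2.

Section Heis.
Variables (V : finType) (e : rel V) (c d : V).
Hypothesis cd : c != d.
Hypothesis ncd : ~~ e c d.
Hypothesis esym : symmetric e.

Definition hmul (g h : rat * rat * rat) : rat * rat * rat :=
  (g.1.1 + h.1.1, g.1.2 + h.1.2, g.2 + h.2 + g.1.1 * h.1.2).

Definition hgen (p : V * bool) : rat * rat * rat :=
  if p.1 == c then (sg p.2, 0, 0) else if p.1 == d then (0, sg p.2, 0) else (0, 0, 0).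

Definition hw (w : word V) := foldr (fun p acc => hmul (hgen p) acc) (0, 0, 0) w.

Lemma hmulA : associative hmul.
Proof.
move=> [[a1 b1] t1] [[a2 b2] t2] [[a3 b3] t3]; rewrite /hmul /=.
congr (_, _, _); ring.
Qed.

Lemma hmul1 g : hmul (0, 0, 0) g = g.
Proof. by case: g => [[a b] t]; rewrite /hmul /= !add0r mul0r addr0. Qed.

Lemma hw_cat a b : hw (a ++ b) = hmul (hw a) (hw b).
Proof. by elim: a => [|p a IH] /=; rewrite ?hmul1 // IH hmulA. Qed.

Lemma hw_req w w' : raag_eq e w w' -> hw w = hw w'.
Proof.
elim=> [w0|w1 w2 _ IH|w1 w2 w3 _ IH1 _ IH2|l0 r0 y b|l0 r0 y z b b' eyz].
- by [].
- by rewrite IH.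
- by rewrite IH1 IH2.
- rewrite !hw_cat; congr (hmul _ _).
  rewrite -[RHS]hmul1; congr (hmul _ _); rewrite /= /hgen /=.
  by case: (y == c); last case: (y == d); case: b; rewrite /hmul /sg /=; congr (_, _, _); ring.
- rewrite !hw_cat; congr (hmul _ _); congr (hmul _ _).
  rewrite /= /hgen /=.
  case: (eqVneq y c) => [yc|yc]; case: (eqVneq y d) => [yd|yd];
  case: (eqVneq z c) => [zc|zc]; case: (eqVneq z d) => [zd|zd];
  rewrite /hmul /=; try (congr (_, _, _); ring).
  all: try (by move: cd; rewrite -yc -yd eqxx).
  all: try (by move: cd; rewrite -zc -zd eqxx).
  all: try (by move: eyz; rewrite yc zd (negbTE ncd)).
  all: try (by move: eyz; rewrite yd zc esym (negbTE ncd)).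
Qed.

Lemma hw_ab w : (hw w).1.1 = ab w c /\ (hw w).1.2 = ab w d.
Proof.
elim: w => [|[y b] w [IH1 IH2]] /=; first by rewrite !ab_nil.
rewrite /hmul /= IH1 IH2 !ab_cons /= /hgen /=.
have dc : (d == c) = false by rewrite eq_sym (negbTE cd).
case: (eqVneq y c) => [->|yc] /=; rewrite ?(negbTE cd) ?dc /=.
  by split; ring.
by case: (y == d) => /=; split; ring.
Qed.

Lemma comm_det (p q : word V) : raag_eq e (p ++ q) (q ++ p) ->
  ab p c * ab q d = ab p d * ab q c.
Proof.
move=> h; have := hw_req h; rewrite !hw_cat /hmul.
have [p1 p2] := hw_ab p; have [q1 q2] := hw_ab q.
case=> _ _; rewrite p1 q2 q1 p2 => E.
have : ab p c * ab q d = ab q c * ab p d.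
  by apply: (addrI ((hw p).2 + (hw q).2)); rewrite E; ring.
by move=> ->; rewrite mulrC.
Qed.

End Heis.

Lemma count_lemma (V : finType) (S1 S2 : {set V}) (m n : V -> V -> rat) :
  (forall x t, \sum_z m x z * n z t = if x == t then 1 else 0) ->
  (forall lam : 'I_#|S1| -> rat,
      (forall t, t \in S2 -> \sum_i lam i * m (enum_val i) t = 0) ->
      forall t, \sum_i lam i * m (enum_val i) t = 0) ->
  (#|S1| <= #|S2|)%N.
Proof.
move=> inv K.
pose A : 'M[rat]_(#|S1|, #|S2|) := \matrix_(i, j) m (enum_val i) (enum_val j).
have rf : row_free A.
  apply: inj_row_free => l hl.
  have hz : forall t, \sum_i l 0 i * m (enum_val i) t = 0.
    apply: K => t tS2.
    have := congr1 (fun M : 'M[rat]_(1, #|S2|) => M 0 (enum_rank_in tS2 t)) hl.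
    rewrite !mxE => E; apply: (etrans _ E); apply: eq_bigr => i _.
    by rewrite mxE enum_rankK_in.
  apply/rowP => j; rewrite mxE.
  have E : \sum_z (\sum_i l 0 i * m (enum_val i) z) * n z (enum_val j) = l 0 j.
    under eq_bigr => z _ do rewrite mulr_suml.
    rewrite exchange_big /=.
    under eq_bigr => i _ do rewrite -(eq_bigr _ (fun z _ => mulrA _ _ _)) -mulr_sumr inv.
    rewrite (bigD1 j) //= eqxx mulr1 big1 ?addr0 // => i ij.
    by rewrite (inj_eq enum_val_inj) (negbTE ij) mulr0.
  rewrite -E big1 // => z _; by rewrite hz mul0r.
have := rank_leq_col A.
by move: rf; rewrite /row_free => /eqP ->.
Qed.

Section Hard.
Variables (VL VG : finType) (eL : rel VL) (eG : rel VG) (phi : VL -> VG).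
Hypothesis sL : simple_graph eL.
Hypothesis sG : simple_graph eG.
Hypothesis cov : covering_map eL eG phi.

Lemma lk_card (x : VL) : #|[set w | eL x w]| = #|[set g | eG (phi x) g]|.
Proof.
case: cov => _ simp linj lsurj.
have -> : [set g | eG (phi x) g] = phi @: [set w | eL x w].
  apply/setP => g; rewrite inE; apply/idP/imsetP.
  - by move=> /lsurj [w xw <-]; exists w; rewrite ?inE.
  - by case=> w; rewrite inE => /simp h ->.
rewrite card_in_imset // => w1 w2; rewrite !inE; exact: linj.
Qed.

Lemma st_card (x : VL) : #|x |: [set w | eL x w]| = (#|[set g | eG (phi x) g]|).+1.
Proof.
by rewrite cardsU1 inE (proj2 sL) lk_card.
Qed.

Variables (v v' : VG).
Hypothesis vv' : v <> v'.
Variable F : VL -> word VL.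
Hypothesis autF : raag_aut eL F.
Hypothesis liftF : forall w : word VL,
  raag_eq eG (subst (transvection v v') (subst (induced_hom phi) w))
             (subst (induced_hom phi) (subst F w)).

Definition mF (x : VL) := ab (F x).

Lemma mF_comm x w c d : eL x w -> c != d -> ~~ eL c d ->
  mF x c * mF w d = mF x d * mF w c.
Proof.
move=> xw cd ncd.
case: autF => hom _ _.
have h := hom _ _ (raag_comm [::] [::] false false xw).
rewrite /subst /= !cats0 in h.
exact: (comm_det cd ncd (proj1 sL) h).
Qed.

Lemma fiber_sum u (x : VG) : phi u = v -> (x == v) || (x == v') ->
  \sum_(y | phi y == x) mF u y = 1.
Proof.
move=> pu hx.
have h := ab_req (liftF [:: (u, false)]) x.
rewrite ab_induced (subst1 F u) in h.
rewrite /mF -h /induced_hom subst1 subst1 /transvection pu eqxx !ab_cons ab_nil /=.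
case/orP: hx => /eqP ->; rewrite ?eqxx.
- have : (v' == v) = false by apply/eqP => E; apply: vv'.
  by move=> ->; rewrite /sg; ring.
- have : (v == v') = false by apply/eqP.
  by move=> ->; rewrite /sg; ring.
Qed.

Lemma fiber_nz u x : phi u = v -> (x == v) || (x == v') ->
  exists y, phi y = x /\ mF u y != 0.
Proof.
move=> pu hx; have S := fiber_sum pu hx.
case: (boolP [exists y, (phi y == x) && (mF u y != 0)]) => [/existsP [y /andP [/eqP ? ?]]|/existsPn H].
  by exists y.
exfalso; move: S; rewrite big1 => [/eqP|y py]; first by rewrite eq_sym oner_eq0.
by move: (H y); rewrite py /= negbK => /eqP.
Qed.


Lemma inv_ident : exists nF : VL -> VL -> rat,
  forall x t, \sum_z mF x z * nF z t = if x == t then 1 else 0.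
Proof.
case: autF => hom inj surj.
have [G HG] : exists G : VL -> word VL, forall x, raag_eq eL (subst F (G x)) [:: (x, false)].
  by apply: (fun_choice (R := fun x w => raag_eq eL (subst F w) [:: (x, false)])) => x; exact: surj.
exists (fun z => ab (G z)) => x t.
have GF : raag_eq eL (subst G (F x)) [:: (x, false)].
  apply: inj; rewrite subst_comp (subst1 F x).
  by have := subst_req (F x) HG; rewrite subst_id.
have := ab_req GF t; rewrite ab_subst ab_cons ab_nil addr0 /= => ->.
by [].
Qed.

Lemma key u y z : phi u = v -> phi y = v -> phi z = v' -> mF u y != 0 -> mF u z != 0 ->
  lk_sub_st eL y z.
Proof.
move=> pu py pz ay az.
case: (boolP [forall w, eL y w ==> (w == z) || eL z w]) => [/forallP H|/forallPn [a]].
  by move=> w yw; move: (H w); rewrite yw /= => /orP [/eqP|]; [left|right].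
rewrite negb_imply negb_or => /and3P [ya naz nza].
exfalso.
have [nF inv] := inv_ident.
pose S1 := u |: [set w | eL u w].
pose S2 := (y |: [set w | eL y w]) :\ a.
have c1 : #|S1| = (#|S2|).+1.
  have := cardsD1 a (y |: [set w | eL y w]).
  rewrite !inE ya orbT /= add1n => <-.
  by rewrite /S1 !st_card pu py.
have ay' : a != y by apply/eqP => E; rewrite E (proj2 sL) in ya.
have yS2 : y \in S2 by rewrite /S2 !inE eq_sym ay' eqxx.
have := @count_lemma _ S1 S2 mF nF inv.
have K : forall lam : 'I_#|S1| -> rat,
      (forall t, t \in S2 -> \sum_i lam i * mF (enum_val i) t = 0) ->
      forall t, \sum_i lam i * mF (enum_val i) t = 0.
  move=> lam hS2.
  have Cb : forall c d, c != d -> ~~ eL c d ->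
      mF u c * (\sum_i lam i * mF (enum_val i) d) = mF u d * (\sum_i lam i * mF (enum_val i) c).
    move=> c d cd ncd; rewrite !mulr_sumr; apply: eq_bigr => i _.
    have : enum_val i \in S1 := enum_valP i.
    rewrite !inE => /orP [/eqP ->|ui]; first by ring.
    by rewrite mulrCA [mF u d * _]mulrCA (mF_comm ui cd ncd).
  have b0 : forall t, t != a -> \sum_i lam i * mF (enum_val i) t = 0.
    move=> t ta; case: (boolP (t \in y |: [set w | eL y w])) => ht.
      by apply: hS2; rewrite /S2 in_setD1 ta ht.
    move: ht; rewrite !inE negb_or => /andP [ty nyt].
    have ty' : y != t by rewrite eq_sym.
    have := Cb y t ty' nyt.
    rewrite (hS2 y yS2) mulr0 => /eqP; rewrite mulf_eq0 (negbTE ay) /= => /eqP //.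
  move=> t; case: (eqVneq t a) => [->|ta]; last exact: b0.
  have za : z != a by rewrite eq_sym.
  have := Cb z a za nza.
  rewrite (b0 z za) mulr0 => /eqP; rewrite mulf_eq0 (negbTE az) /= => /eqP //.
move=> /(_ K); by rewrite c1 ltnn.
Qed.

Hypothesis reg : forall u u', phi u = phi u' ->
    exists mu, [/\ graph_aut eL mu, forall w, phi (mu w) = phi w & mu u = u'].

Lemma hard_dir : lesssim eL phi v v'.
Proof.
move=> u pu.
have [y [py ay]] := @fiber_nz u v pu (introT orP (or_introl (eqxx v))).
have [z [pz az]] := @fiber_nz u v' pu (introT orP (or_intror (eqxx v'))).
have lyz := key pu py pz ay az.
have [mu [[[g mug gmu] autmu] phimu muy]] := reg (etrans py (esym pu)).
exists (mu z); split; first by rewrite phimu.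
move=> w uw; rewrite -muy -(gmu w) autmu in uw.
case: (lyz _ uw) => [E|E].
  by left; rewrite -(gmu w) E.
by right; rewrite -(gmu w) autmu.
Qed.

End Hard.

Close Scope ring_scope.
Theorem corollary8p4 (VL VG : finType) (eL : rel VL) (eG : rel VG)
    (phi : VL -> VG) :
  simple_graph eL -> simple_graph eG ->
  no_isolated eL -> no_isolated eG ->
  regular_covering eL eG phi ->
  forall v v' : VG, v <> v' -> lk_sub_st eG v v' ->
  (liftable eL eG phi (transvection v v') <-> lesssim eL phi v v').
Proof.
move=> sL sG _ _ [cov reg] v v' vv' _; split.
- case=> F [autF liftF].
  exact: (hard_dir sL cov vv' autF liftF reg).
- move=> les.
  have [pr Hpr] : exists pr : VL -> VL, forall x, phi x = v -> phi (pr x) = v' /\ lk_sub_st eL x (pr x).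
    apply: (fun_choice (R := fun x y => phi x = v -> phi y = v' /\ lk_sub_st eL x y)) => x.
    case: (boolP (phi x == v)) => [/eqP px|px].
      by have [y [py ly]] := les x px; exists y.
    by exists x => /eqP; rewrite (negbTE px).
  have simp : forall u w, eL u w -> eG (phi u) (phi w) by case: cov.
  exists (Fs phi v pr false); split.
  + exact: (Fs_aut sL sG simp vv' Hpr false).
  + exact: (Fs_lift eG Hpr).
Qed.
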